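(* Let $n\ge 3$, let $\varepsilon$ be an $n\times n$ signature matrix and let $(a_{\mathbf{i}})_{\mathbf{i}\in\mathbb{Z}^n}$ be an $\varepsilon$-$\mathrm{SL}_2$-tiling of $\mathbb{Z}^n$. Then every entry $a_{\mathbf{i}}$ is an odd-indexed Fibonacci number $F_{2m-1}$ ($m\ge1$), and for all $\mathbf{i}\in\mathbb{Z}^n$ and all $k\in\{1,\dots,n\}$ one has $a_{\mathbf{i}+\mathbf{e}_k}^2-a_{\mathbf{i}}a_{\mathbf{i}+2\mathbf{e}_k}=-1=\varepsilon_{kk}$.
   Context: Write $\mathbf{i}=(i_1,\dots,i_n)\in\mathbb{Z}^n$ and $\mathbf{e}_k$ for the $k$-th standard unit vector. Fibonacci numbers are indexed $F_1=1,F_2=1,F_3=2,F_4=3,F_5=5,\dots$ with $F_{m+2}=F_{m+1}+F_m$. A signature matrix is a symmetric $n\times n$ matrix $\varepsilon=(\varepsilon_{k\ell})$ with $\varepsilon_{k\ell}\in\{1,-1\}$ for $k\ne\ell$ and $\varepsilon_{kk}=-1$. Given a signature matrix $\varepsilon$, an array $(a_{\mathbf{i}})_{\mathbf{i}\in\mathbb{Z}^n}$ with all $a_{\mathbf{i}}\in\mathbb{Z}_{>0}$ is an $\varepsilon$-$\mathrm{SL}_2$-tiling of $\mathbb{Z}^n$ if for all $\mathbf{i}\in\mathbb{Z}^n$ and all $k\ne\ell$: $a_{\mathbf{i}+\mathbf{e}_\ell}a_{\mathbf{i}+\mathbf{e}_k}-a_{\mathbf{i}}a_{\mathbf{i}+\mathbf{e}_k+\mathbf{e}_\ell}=\varepsilon_{k\ell}$.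 *)

(* Defs.v *)
From mathcomp Require Import all_boot all_order all_algebra.
Set Implicit Arguments. Unset Strict Implicit. Unset Printing Implicit Defensive.
Import Order.TTheory GRing.Theory Num.Theory.
Local Open Scope ring_scope.

Fixpoint fib (m : nat) : nat :=
  match m with
  | 0 => 0
  | 1 => 1
  | (p.+1 as q).+1 => fib q + fib p
  end%N.

Definition shift (n : nat) (i : 'I_n -> int) (k : 'I_n) : 'I_n -> int :=
  fun j => i j + (j == k)%:R.

Definition is_signature (n : nat) (eps : 'I_n -> 'I_n -> int) : Prop :=
  (forall k l, eps k l = eps l k) /\
  (forall k l, k != l -> eps k l = 1 \/ eps k l = -1) /\
  (forall k, eps k k = -1).

Definition is_SL2_tiling (n : nat) (eps : 'I_n -> 'I_n -> int)
  (a : ('I_n -> int) -> int) : Prop :=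
  (forall i, 0 < a i) /\
  (forall i k l, k != l ->
     a (shift i l) * a (shift i k) - a i * a (shift (shift i k) l) = eps k l).

(* Main.v *)
Require Import Defs.
From mathcomp Require Import all_boot all_order all_algebra.
From mathcomp Require Import zify ring lra.
From Stdlib Require Import FunctionalExtensionality.
Import Order.TTheory GRing.Theory Num.Theory.
Local Open Scope ring_scope.
Set Implicit Arguments. Unset Strict Implicit.

Definition unshift n (i : 'I_n -> int) (l : 'I_n) : 'I_n -> int := fun j => i j - (j == l)%:R.
Definition shiftz n (i : 'I_n -> int) (k : 'I_n) (t : int) : 'I_n -> int := fun j => i j + (j == k)%:R * t.

Arguments unshift {n}.
Arguments shiftz {n}.

Lemma shift_comm {n} (i : 'I_n -> int) (k l : 'I_n) : shift (shift i k) l = shift (shift i l) k.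
Proof. apply: functional_extensionality => j; rewrite /shift; ring. Qed.
Lemma shift_unshift {n} (i : 'I_n -> int) (l : 'I_n) : shift (unshift i l) l = i.
Proof. apply: functional_extensionality => j; rewrite /shift /unshift; ring. Qed.
Lemma unshift_shift {n} (i : 'I_n -> int) (k l : 'I_n) : unshift (shift i k) l = shift (unshift i l) k.
Proof. apply: functional_extensionality => j; rewrite /shift /unshift; ring. Qed.
Lemma shiftzS {n} (i : 'I_n -> int) (k : 'I_n) (t : int) : shiftz i k (t + 1) = shift (shiftz i k t) k.
Proof. apply: functional_extensionality => j; rewrite /shift /shiftz; ring. Qed.
Lemma shiftz0 {n} (i : 'I_n -> int) (k : 'I_n) : shiftz i k 0 = i.
Proof. apply: functional_extensionality => j; rewrite /shiftz; ring. Qed.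

Lemma tri_alg (x y z e1 e2 e3 : int) : 0 < x -> 0 < y -> 0 < z ->
  (e1 = 1 \/ e1 = -1) -> (e2 = 1 \/ e2 = -1) -> (e3 = 1 \/ e3 = -1) ->
  (y*z - e1)*(y*e3 - z*e2) = x^+2*(z*e3 - y*e2) ->
  (e3*e2 = 1 -> y = z) /\ (e3*e2 = -1 -> y*z - e1 = x^+2).
Proof.
move=> x0 y0 z0 h1 h2 h3 H.
have yz0 : 0 < y * z by rewrite mulr_gt0.
have xx0 : 0 < x ^+ 2 by rewrite exprn_gt0.
split=> hs.
- have E : (y - z) * (y*z - e1 + x^+2) * e3 = (y*z - e1)*(y*e3 - z*e2) - x^+2*(z*e3 - y*e2).
    by case: h2 h3 hs => -> [] -> //= _; ring.
  move: E; rewrite H subrr => /eqP; rewrite !mulf_eq0 => /orP[/orP[]|] /eqP.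
  + by move/eqP; rewrite subr_eq0 => /eqP.
  + move=> E; exfalso; case: h1 => h1; lia.
  + by case: h3 => ->.
- have E : (y + z) * (y*z - e1 - x^+2) * e3 = (y*z - e1)*(y*e3 - z*e2) - x^+2*(z*e3 - y*e2).
    by case: h2 h3 hs => -> [] -> //= _; ring.
  move: E; rewrite H subrr => /eqP; rewrite !mulf_eq0 => /orP[/orP[]|] /eqP.
  + move=> E; exfalso; lia.
  + by move/eqP; rewrite subr_eq0 => /eqP.
  + by case: h3 => ->.
Qed.

Lemma alg6 (x y z w P Q R T e1 e2 e3 : int) :
  z*y - x*P = e1 -> w*y - x*Q = e2 -> w*z - x*R = e3 ->
  Q*P - y*T = e3 -> R*P - z*T = e2 ->
  (y*z - e1)*(y*e3 - z*e2) = x^+2*(z*e3 - y*e2).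
Proof.
move=> H1 H2 H3 H4 H5.
rewrite -H1 -{1}H3 -{1}H2 -H4 -H5; ring.
Qed.

Lemma noline_fwd (b : int -> int) : (forall t, 0 < b t) ->
  (forall t : int, b (t+1) ^+ 2 - b t * b (t+2) = 1) -> b 1 <= b 0 -> False.
Proof.
move=> pos rel h.
have step : forall t : int, b (t+1) <= b t -> b (t+2) < b (t+1).
  move=> t ht; have := rel t; have := pos t; have := pos (t+1); have := pos (t+2).
  rewrite expr2 => ? ? ? ?; nia.
have mono : forall k : nat, b (k%:Z + 1) <= b k%:Z.
  elim=> [|k IH]; first by [].
  have := step _ IH; have -> : k.+1%:Z = k%:Z + 1 by lia.
  have -> : k%:Z + 1 + 1 = k%:Z + 2 by lia. by move/ltW.
have dec : forall k : nat, b (k%:Z + 1) <= b 1 - k%:Z.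
  elim=> [|k IH]; first by have -> : (0%N)%:Z + 1 = 1 by []; rewrite subr0.
  have := step _ (mono k).
  have -> : k.+1%:Z + 1 = k%:Z + 2 by lia. lia.
have := pos 1; case E: (b 1) => [m|m] // _.
have := dec m; have := pos (m%:Z + 1); lia.
Qed.

Lemma noline (b : int -> int) : (forall t, 0 < b t) ->
  (forall t : int, b (t+1) ^+ 2 - b t * b (t+2) = 1) -> False.
Proof.
move=> pos rel; case: (lerP (b 1) (b 0)) => h; first exact: noline_fwd pos rel h.
apply: (@noline_fwd (fun s => b (1 - s))) => /=.
- by move=> t; apply: pos.
- move=> t; have := rel (-1 - t).
  have -> : -1 - t + 1 = 1 - (t + 1) by lia.
  have -> : -1 - t + 2 = 1 - t by lia.
  have -> : 1 - (t + 2) = -1 - t by lia. lia.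
- by rewrite subr0 subrr; apply: ltW.
Qed.

Fixpoint o (m : nat) : int :=
  match m with 0%N => 1 | 1%N => 1 | (p.+1 as q).+1 => 3 * o q - o p end.

Lemma oS m : o m.+2 = 3 * o m.+1 - o m. Proof. by []. Qed.

Lemma fib_rec k : (fib k.+4 + fib k = 3 * fib k.+2)%N.
Proof.
have f : forall j, fib j.+2 = (fib j.+1 + fib j)%N by [].
rewrite !f; lia.
Qed.

Lemma o_fib m : o m.+1 = (fib (2 * m.+1 - 1))%:Z /\ o m.+2 = (fib (2 * m.+2 - 1))%:Z.
Proof.
elim: m => [|m [IH1 IH2]]; first by [].
split; first by [].
rewrite oS IH2 IH1.
have -> : (2 * m.+3 - 1 = (2 * m.+1 - 1).+4)%N by lia.
have -> : (2 * m.+2 - 1 = (2 * m.+1 - 1).+2)%N by lia.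
have := fib_rec (2 * m.+1 - 1); lia.
Qed.

Lemma o_inv m : o m ^+ 2 + o m.+1 ^+ 2 + 1 = 3 * o m * o m.+1.
Proof.
elim: m => [|m IH]; first by [].
rewrite oS; rewrite !expr2 in IH *; lia.
Qed.

Lemma o_cass m : o m * o m.+2 = o m.+1 ^+ 2 + 1.
Proof. have := o_inv m; rewrite oS !expr2; lia. Qed.

Lemma o_mono m : 1 <= o m <= o m.+1.
Proof. elim: m => [|m IH] //; rewrite oS; lia. Qed.

Lemma o_strict m : o m.+1 < o m.+2.
Proof. have := o_mono m; have := o_mono m.+1; rewrite oS; lia. Qed.

Definition pairP (u v : int) := exists m, (u = o m /\ v = o m.+1) \/ (u = o m.+1 /\ v = o m).

Lemma desc (N : nat) : forall b : int -> int, (forall t : int, 0 < b t) ->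
  (forall t : int, b t * b (t + 2) = b (t + 1) ^+ 2 + 1) ->
  forall t : int, b t + b (t + 1) <= N%:Z -> pairP (b t) (b (t + 1)).
Proof.
elim: N => [|N IH] b pos rel t hN.
  by have := pos t; have := pos (t+1); lia.
have up : forall b : int -> int, (forall t : int, 0 < b t) ->
  (forall t : int, b t * b (t + 2) = b (t + 1) ^+ 2 + 1) ->
  forall t : int, b t + b (t + 1) <= N.+1%:Z -> b t < b (t+1) -> pairP (b t) (b (t + 1)).
  move=> c cpos crel s hs lt.
  have r := crel (s - 1).
  have e1 : s - 1 + 2 = s + 1 by lia.
  have e2 : s - 1 + 1 = s by lia.
  rewrite e1 e2 in r.
  have le : c (s - 1) <= c s.
    have := cpos (s-1); have := cpos s; have := cpos (s+1); rewrite expr2 in r; nia.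
  have := IH c cpos crel (s - 1); rewrite e2 => /(_ ltac:(lia)) [m [[h1 h2]|[h1 h2]]].
  - exists m.+1; left; split => //.
    have := o_mono m => om.
    have : o m * (c (s + 1) - o m.+2) = 0.
      by rewrite mulrBr o_cass -h2 -r h1 subrr.
    move/eqP; rewrite mulf_eq0 => /orP[/eqP|]; first lia.
    by rewrite subr_eq0 => /eqP.
  - case: m h1 h2 => [|m] h1 h2.
    + exists 1%N; left; split; first by rewrite h2.
      move: r; rewrite h1 h2 /= => r; lia.
    + exfalso; have := o_strict m; lia.
have pm : forall u v, pairP u v -> pairP v u.
  by move=> u v [m [[-> ->]|[-> ->]]]; exists m; [right|left].
case: (ltgtP (b t) (b (t+1))) => h.
- exact: up.
- apply: pm.
  pose c := fun s => b (- s).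
  have := up c _ _ (- (t + 1)).
  rewrite /c opprK.
  have -> : - (- (t + 1) + 1) = t by lia.
  apply.
  + by move=> s; apply: pos.
  + move=> s; have := rel (- s - 2).
    have -> : - s - 2 + 2 = - s by lia.
    have -> : - s - 2 + 1 = - (s + 1) by lia.
    have -> : - (s + 2) = - s - 2 by lia.
    rewrite mulrC. by [].
  + lia.
  + lia.
- have r := rel t; rewrite -h in r.
  have := pos t; have := pos (t + 2); rewrite expr2 in r => p1 p2.
  have hd : b t * (b (t + 2) - b t) = 1 by rewrite mulrBr r; ring.
  have d0 : 0 < b (t + 2) - b t by nia.
  have bt1 : b t = 1 by nia.
  by exists 0%N; left; rewrite -h bt1.
Qed.

Lemma sgn {n} (eps : 'I_n -> 'I_n -> int) (k l : 'I_n) : is_signature eps -> k != l ->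
  eps k l = 1 \/ eps k l = -1.
Proof. by case=> _ [h _] kl; apply: h. Qed.

Lemma triple {n} eps (a : ('I_n -> int) -> int) (p q r : 'I_n) :
  is_signature eps -> is_SL2_tiling eps a -> p != q -> p != r -> q != r ->
  forall i, (eps q r * eps p r = 1 -> a (shift i p) = a (shift i q)) /\
    (eps q r * eps p r = -1 -> a (shift i p) * a (shift i q) - eps p q = a i ^+ 2).
Proof.
move=> hs [pos H] pq pr qr i.
apply: (@tri_alg (a i)) => //; try exact: sgn.
have E5 := H (shift i q) p r (pr); rewrite (shift_comm i q p) in E5.
have X := @alg6 _ _ _ _ _ _ _ _ _ _ _ (H i p q pq) (H i p r pr) (H i q r qr) (H (shift i p) q r qr) E5. exact X.
Qed.

Lemma eqline {n} eps (a : ('I_n -> int) -> int) (p q : 'I_n) :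
  is_SL2_tiling eps a -> p != q -> (forall i, a (shift i p) = a (shift i q)) ->
  forall j, a (shift j p) ^+ 2 - a j * a (shift (shift j p) p) = eps p q.
Proof.
move=> [_ H] pq E j; have := H j p q pq.
by rewrite -(E j) -(E (shift j p)) expr2.
Qed.

Lemma noline_tiling {n} (a : ('I_n -> int) -> int) (k : 'I_n) :
  (forall i, 0 < a i) ->
  (forall j, a (shift j k) ^+ 2 - a j * a (shift (shift j k) k) = 1) -> False.
Proof.
move=> pos L.
apply: (@noline (fun t => a (shiftz (fun _ => 0) k t))) => [t|t]; first exact: pos.
have -> : t + 2 = (t + 1) + 1 by lia.
rewrite !shiftzS; exact: L.
Qed.

Lemma lineK {n} eps (a : ('I_n -> int) -> int) (k l m : 'I_n) :
  is_signature eps -> is_SL2_tiling eps a -> k != l -> k != m -> l != m ->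
  forall j, a (shift j k) ^+ 2 - a j * a (shift (shift j k) k) = -1.
Proof.
move=> hs ht kl km lm.
have [sym [_ _]] := hs.
have pos := ht.1.
have force : forall p q, p != q -> (forall i, a (shift i p) = a (shift i q)) ->
    (forall j, a (shift j p) ^+ 2 - a j * a (shift (shift j p) p) = -1) /\ eps p q = -1.
  move=> p q pq E; have L := eqline ht pq E.
  case: (sgn hs pq) => e; last by rewrite -e.
  by exfalso; apply: (noline_tiling pos (k := p)); rewrite -e.
have T1 := triple hs ht kl km lm.
have ml : m != l by rewrite eq_sym.
have T2 := triple hs ht km kl ml.
have lk : l != k by rewrite eq_sym.
have mk : m != k by rewrite eq_sym.
have T3 := triple hs ht lm lk mk.

have sl := sym m l; have sk := sym m k; have slk := sym l k.
case: (sgn hs lm) => e1; case: (sgn hs km) => e2; case: (sgn hs kl) => e3.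
- by have [] := force k l kl (fun i => (T1 i).1 ltac:(rewrite e1 e2 //)).
- by have [] := force k l kl (fun i => (T1 i).1 ltac:(rewrite e1 e2 //)).
- by have [] := force k m km (fun i => (T2 i).1 ltac:(rewrite sl e1 e3 //)).
- have [_ e] := force l m lm (fun i => (T3 i).1 ltac:(rewrite sk slk e2 e3 //)).
  by rewrite e in e1.
- have [Ll _] := force l m lm (fun i => (T3 i).1 ltac:(rewrite sk slk e2 e3 //)).
  have T := fun i => (T1 i).2 ltac:(rewrite e1 e2 //).
  have F : forall j, a (shift j k) = a (unshift j l).
    move=> j; have := Ll (unshift j l); rewrite shift_unshift => h1.
    have h2 := T j; rewrite e3 in h2.
    have : (a (shift j k) - a (unshift j l)) * a (shift j l) = 0.
      rewrite mulrBl; lia.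
    move/eqP; rewrite mulf_eq0 => /orP[|/eqP]; first by rewrite subr_eq0 => /eqP.
    by have := pos (shift j l); lia.
  move=> j; rewrite (F (shift j k)) unshift_shift (F (unshift j l)) (F j).
  have := Ll (unshift (unshift j l) l); rewrite !shift_unshift; lia.
- by have [] := force k m km (fun i => (T2 i).1 ltac:(rewrite sl e1 e3 //)).
- by have [] := force k l kl (fun i => (T1 i).1 ltac:(rewrite e1 e2 //)).
- by have [] := force k l kl (fun i => (T1 i).1 ltac:(rewrite e1 e2 //)).
Qed.

Lemma pick3 {n} (k : 'I_n) : (3 <= n)%N -> exists l m : 'I_n, [/\ k != l, k != m & l != m].
Proof.
move=> n3.
have h0 : (0 < n)%N by lia. have h1 : (1 < n)%N by lia. have h2 : (2 < n)%N by lia.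
pose o0 := Ordinal h0; pose o1 := Ordinal h1; pose o2 := Ordinal h2.
have ne : forall x y : 'I_n, (val x != val y) -> x != y.
  by move=> x y; apply: contra => /eqP ->.
case: (eqVneq (val k) 0%N) => e0.
  by exists o1, o2; split; apply: ne; rewrite /= ?e0.
case: (eqVneq (val k) 1%N) => e1.
  by exists o0, o2; split; apply: ne; rewrite /= ?e1.
by exists o0, o1; split; apply: ne.
Qed.

Lemma o_to_fib m : exists m' : nat, (1 <= m')%N /\ o m = (fib (2 * m' - 1))%:Z.
Proof.
case: m => [|m]; first by exists 1%N.
by exists m.+1; split => //; case: (o_fib m).
Qed.

Theorem mainTheorem8 (n : nat) (eps : 'I_n -> 'I_n -> int)
  (a : ('I_n -> int) -> int) :
  (3 <= n)%N -> is_signature eps -> is_SL2_tiling eps a ->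
  (forall i, exists m : nat, (1 <= m)%N /\ a i = (fib (2 * m - 1))%:Z) /\
  (forall i k, a (shift i k) ^+ 2 - a i * a (shift (shift i k) k) = -1 /\
               eps k k = -1).
Proof.
move=> n3 hs ht.
have L : forall k j, a (shift j k) ^+ 2 - a j * a (shift (shift j k) k) = -1.
  move=> k; have [l [m [kl km lm]]] := pick3 k n3.
  exact: lineK hs ht kl km lm.
split; last by move=> i k; split; [exact: L | exact: hs.2.2].
move=> i.
have h0 : (0 < n)%N by lia.
pose k := Ordinal h0.
pose b := fun t => a (shiftz i k t).
have pos : forall t, 0 < b t by move=> t; exact: ht.1.
have rel : forall t : int, b t * b (t + 2) = b (t + 1) ^+ 2 + 1.
  move=> t; rewrite /b.
  have -> : t + 2 = (t + 1) + 1 by lia.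
  rewrite !shiftzS; have := L k (shiftz i k t); lia.
have [N hN] : exists N : nat, b 0 + b (0 + 1) <= N%:Z.
  by exists (absz (b 0 + b (0 + 1))); rewrite abszE; exact: ler_norm.
have [m hm] := desc pos rel hN.
have [m' [hm1 hm2]] : exists m', (1 <= m')%N /\ b 0 = (fib (2 * m' - 1))%:Z.
  case: hm => [[-> _]|[-> _]]; exact: o_to_fib.
by exists m'; split => //; rewrite -hm2 /b shiftz0.
Qed.
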